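(* Let $X,Y$ be finite nonempty sets, $\alpha>0$, and let $A\in\mathbb{R}^{X\times Y}$ satisfy $\operatorname{Ldim}_\alpha(A)=d$, $\|A\|_{\gamma_2}=\gamma$ and $\max_{x,y}|A(x,y)|=M$. Then $$\gamma\ge\frac{\alpha\sqrt d}{2(M+1)}-1 .$$ Consequently (since $M\le\gamma$), $d\le 4(\gamma+1)^4/\alpha^2$; in particular $d=O_\alpha(\gamma^4)$.
   Context: The $\gamma_2$ factorization norm of a matrix $A$ is $\|A\|_{\gamma_2}=\min_{UV=A}\|U\|_{\mathrm{row}}\|V\|_{\mathrm{col}}$, where the minimum is over all factorizations $A=UV$, $\|U\|_{\mathrm{row}}$ is the largest Euclidean norm of a row of $U$ and $\|V\|_{\mathrm{col}}$ the largest Euclidean norm of a column of $V$. A weighted mistake tree of depth $d$ over $X$ is a complete binary tree of depth $d$ in which each internal node $\nu$ is labelled by $x(\nu)\in X$ and a real number $w(\nu)$, with a designated left and right child. $A$ $\alpha$-shatters it if for every root-to-leaf path $(\nu_1,\dots,\nu_{d+1})$ there is $y\in Y$ such that for all $1\le i\le d$: $A(x(\nu_i),y)\ge w(\nu_i)+\alpha/2$ if $\nu_{i+1}$ is the left child of $\nu_i$, and $A(x(\nu_i),y)\le w(\nu_i)-\alpha/2$ if $\nu_{i+1}$ is the right child. $\operatorname{Ldim}_\alpha(A)$ is the largest $d$ such that some weighted mistake tree of depth $d$ is $\alpha$-shattered by $A$. *)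

(* Defs.v *)
From HB Require Import structures.
From mathcomp Require Import all_boot all_order all_algebra.
From mathcomp Require Import classical_sets reals.
Set Implicit Arguments. Unset Strict Implicit. Unset Printing Implicit Defensive.
Import Order.TTheory GRing.Theory Num.Theory.
Local Open Scope ring_scope.
Local Open Scope classical_set_scope.

Section Defs.
Variables (R : realType) (X Y : finType).

Definition row_norm (k : nat) (U : X -> 'I_k -> R) : R :=
  \big[Num.max/0]_(x : X) Num.sqrt (\sum_(i < k) U x i ^+ 2).

Definition col_norm (k : nat) (V : 'I_k -> Y -> R) : R :=
  \big[Num.max/0]_(y : Y) Num.sqrt (\sum_(i < k) V i y ^+ 2).

Definition factorizes (A : X -> Y -> R) (k : nat)
  (U : X -> 'I_k -> R) (V : 'I_k -> Y -> R) : Prop :=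
  forall x y, A x y = \sum_(i < k) U x i * V i y.
Arguments factorizes : clear implicits.

Definition gamma2 (A : X -> Y -> R) : R :=
  inf [set r : R | exists k (U : X -> 'I_k -> R) (V : 'I_k -> Y -> R),
         factorizes A k U V /\ r = row_norm U * col_norm V].

Definition max_abs (A : X -> Y -> R) : R :=
  \big[Num.max/0]_(x : X) \big[Num.max/0]_(y : Y) `|A x y|.

(* A weighted mistake tree of depth d: internal nodes are bit strings
   of length < d (true = go to the left child); node v is labelled by
   xl v : X and wl v : R.  A root-to-leaf path is a d-tuple of bits b,
   visiting the nodes take i b (i < d). *)
Definition shatters (A : X -> Y -> R) (alpha : R) (d : nat)
  (xl : seq bool -> X) (wl : seq bool -> R) : Prop :=
  forall b : d.-tuple bool, exists y : Y, forall i : 'I_d,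
    let v := take i b in
    if tnth b i then wl v + alpha / 2 <= A (xl v) y
    else A (xl v) y <= wl v - alpha / 2.

Definition shattered_at_depth (A : X -> Y -> R) (alpha : R) (d : nat) : Prop :=
  exists (xl : seq bool -> X) (wl : seq bool -> R), shatters A alpha d xl wl.

Definition Ldim_is (A : X -> Y -> R) (alpha : R) (d : nat) : Prop :=
  shattered_at_depth A alpha d /\
  forall d', shattered_at_depth A alpha d' -> (d' <= d)%N.

End Defs.

(* Main.v *)
Require Import Defs.
From mathcomp Require Import all_boot all_order all_algebra.
From mathcomp Require Import classical_sets reals.
From mathcomp Require Import ring lra.
Import Order.TTheory GRing.Theory Num.Theory.
Local Open Scope ring_scope.

Section Perc.
Variables (R : realType) (X : finType) (k : nat) (U : X -> 'I_k -> R)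
  (xl : seq bool -> X) (wl : seq bool -> R) (lam : R).

Definition sg (b : bool) : R := if b then 1 else -1.
Definition gv (P : 'I_k -> R) (q : R) (s : seq bool) : R :=
  lam * (\sum_i P i * U (xl s) i) - q * wl s.

Fixpoint st (n : nat) : seq bool * ('I_k -> R) * R :=
  if n is n'.+1 then
    let: (s, P, q) := st n' in
    let bt := gv P q s <= 0 in
    (rcons s bt, fun i => P i + sg bt * U (xl s) i, q - sg bt * wl s)
  else ([::], fun _ => 0, 0).

Definition pth n := (st n).1.1.
Definition Pn n := (st n).1.2.
Definition qn n := (st n).2.
Definition bitf n := gv (Pn n) (qn n) (pth n) <= 0.

Lemma stS n : st n.+1 = (rcons (pth n) (bitf n),
   fun i => Pn n i + sg (bitf n) * U (xl (pth n)) i,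
   qn n - sg (bitf n) * wl (pth n)).
Proof. by rewrite /= /bitf /pth /Pn /qn; case: (st n) => [[s P] q]. Qed.

Lemma pthS n : pth n.+1 = rcons (pth n) (bitf n).
Proof. by rewrite /pth stS. Qed.
Lemma PnS n i : Pn n.+1 i = Pn n i + sg (bitf n) * U (xl (pth n)) i.
Proof. by rewrite /Pn stS. Qed.
Lemma qnS n : qn n.+1 = qn n - sg (bitf n) * wl (pth n).
Proof. by rewrite /qn stS. Qed.

Lemma size_pth n : size (pth n) = n.
Proof. by elim: n => [//|n IH]; rewrite pthS size_rcons IH. Qed.

Lemma take_pth j n : (j <= n)%N -> take j (pth n) = pth j.
Proof.
elim: n => [|n IH]; first by rewrite leqn0 => /eqP ->.
rewrite leq_eqVlt => /orP[/eqP ->|]; first by rewrite take_oversize // size_pth.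
rewrite ltnS => hj; rewrite pthS -cats1 takel_cat ?size_pth // IH //.
Qed.

Lemma nth_pth j n : (j < n)%N -> nth false (pth n) j = bitf j.
Proof.
elim: n => [//|n IH]; rewrite pthS nth_rcons size_pth ltnS leq_eqVlt.
case/orP => [/eqP ->|hj]; first by rewrite ltnn eqxx.
by rewrite hj IH.
Qed.

Lemma Pn_sum n i : Pn n i = \sum_(j < n) sg (bitf j) * U (xl (pth j)) i.
Proof. elim: n => [|n IH]; first by rewrite big_ord0.
by rewrite PnS big_ord_recr /= IH. Qed.

Lemma qn_sum n : qn n = - \sum_(j < n) sg (bitf j) * wl (pth j).
Proof. elim: n => [|n IH]; first by rewrite big_ord0 oppr0.
by rewrite qnS big_ord_recr /= IH opprD. Qed.

Lemma pot n (B : R) :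
  (forall j, (j < n)%N -> lam * \sum_i U (xl (pth j)) i ^+ 2 + wl (pth j) ^+ 2 <= B) ->
  lam * \sum_i Pn n i ^+ 2 + qn n ^+ 2 <= n%:R * B.
Proof.
elim: n => [|n IH] hB; first by rewrite mul0r big1 ?mulr0 ?expr0n ?addr0 // => i _; rewrite /Pn /= expr0n.
have IH' := IH (fun j hj => hB j (ltnW hj)).
have hBn := hB n (ltnSn n).
have e : \sum_i Pn n.+1 i ^+ 2 = \sum_i Pn n i ^+ 2
   + 2 * sg (bitf n) * (\sum_i Pn n i * U (xl (pth n)) i)
   + sg (bitf n) ^+ 2 * \sum_i U (xl (pth n)) i ^+ 2.
  rewrite mulr_sumr mulr_sumr -!big_split /=; apply: eq_bigr => i _.
  rewrite PnS; ring.
rewrite e qnS.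
have hg : sg (bitf n) * gv (Pn n) (qn n) (pth n) <= 0.
  rewrite /sg; case h: (bitf n); rewrite /bitf in h.
    by rewrite mul1r h.
  by rewrite mulN1r oppr_le0; move: h => /negbT; rewrite -ltNge => /ltW.
have hs : sg (bitf n) ^+ 2 = 1 by rewrite /sg; case: (bitf n); rewrite ?expr1n ?sqrrN ?expr1n.
move: hg; rewrite /gv hs.
set a := \sum_i Pn n i ^+ 2; set b := \sum_i Pn n i * _; set c := \sum_i _ ^+ 2.
set s := sg _; set q := qn n; set w := wl _.
move=> hg.
have hs' : s ^+ 2 = 1 by rewrite hs.

have -> : lam * (a + 2 * s * b + 1 * c) + (q - s * w) ^+ 2 =
   (lam * a + q ^+ 2) + 2 * (s * (lam * b - q * w)) + (lam * c + s ^+ 2 * w ^+ 2) by ring.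
rewrite hs' mul1r -addn1 natrD mulrDl mul1r. move: IH' hBn; rewrite -/a -/c -/q -/w. lra.
Qed.

End Perc.


Lemma cs (R : realType) k (P V : 'I_k -> R) :
  (\sum_i P i * V i) ^+ 2 <= (\sum_i P i ^+ 2) * (\sum_i V i ^+ 2).
Proof.
set a := \sum_i P i ^+ 2; set b := \sum_i P i * V i; set c := \sum_i V i ^+ 2.
have ha : 0 <= a by apply: sumr_ge0 => i _; apply: sqr_ge0.
have h : 0 <= \sum_i (a * V i - b * P i) ^+ 2 by apply: sumr_ge0 => i _; apply: sqr_ge0.
have e : \sum_i (a * V i - b * P i) ^+ 2 = a ^+ 2 * c - 2 * a * b * b + b ^+ 2 * a.
  rewrite (eq_bigr (fun i => a ^+ 2 * V i ^+ 2 - (2 * a * b) * (P i * V i) + b ^+ 2 * P i ^+ 2)); last by move=> i _; ring.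
  by rewrite big_split /= big_split /= sumrN -!mulr_sumr.
rewrite e in h.
case: (ltrgtP a 0) => [|ha0|ha0]; first by rewrite ltNge ha.
  have : 0 <= a * (a * c - b ^+ 2) by move: h; rewrite -[_ * (_ - _)]addr0; nra.
  by rewrite pmulr_rge0 // subr_ge0 mulrC.
have hP : forall i, P i = 0.
  move=> i; apply/eqP; rewrite -sqrf_eq0; apply/eqP.
  by apply: (psumr_eq0P (fun i _ => sqr_ge0 (P i)) ha0).
have -> : b = 0 by rewrite /b big1 // => i _; rewrite hP mul0r.
by rewrite ha0 expr0n mul0r.
Qed.

Lemma comb (R : realType) (A t Z q : R) :
  0 <= A -> 0 <= t -> Z ^+ 2 <= A * t -> 2 * Z * q <= A + q ^+ 2 * t.
Proof.
move=> hA ht hZ.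
case: (ltrgtP A 0) => [|hA0|hA0]; first by rewrite ltNge hA.
  have : 0 <= A * (A + q ^+ 2 * t - 2 * Z * q).
    have -> : A * (A + q ^+ 2 * t - 2 * Z * q) = (A - Z * q) ^+ 2 + q ^+ 2 * (A * t - Z ^+ 2) by ring.
    apply: addr_ge0; first exact: sqr_ge0.
    by apply: mulr_ge0; [exact: sqr_ge0| rewrite subr_ge0].
  by rewrite pmulr_rge0 // subr_ge0.
have hZ0 : Z = 0.
  apply/eqP; rewrite -sqrf_eq0 eq_le sqr_ge0 andbT; move: hZ; rewrite hA0 mul0r //.
rewrite hZ0 hA0; nra.
Qed.


Section M.
Variables (R : realType) (X Y : finType).

Lemma abs_le_max (A : X -> Y -> R) x y : `|A x y| <= max_abs A.
Proof.
rewrite /max_abs; apply: le_trans (le_bigmax _ _ x).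
exact: (le_bigmax _ (fun y => `|A x y|) y).
Qed.

Lemma max_abs_ge0 (A : X -> Y -> R) : 0 <= max_abs A.
Proof. exact: bigmax_ge_id. Qed.

Lemma row_ge {k : nat} (U : X -> 'I_k -> R) x :
  \sum_i U x i ^+ 2 <= row_norm U ^+ 2.
Proof.
have h : Num.sqrt (\sum_i U x i ^+ 2) <= row_norm U
  by exact: (le_bigmax _ (fun x => Num.sqrt (\sum_i U x i ^+ 2)) x).
rewrite -(sqr_sqrtr (sumr_ge0 _ (fun i _ => sqr_ge0 (U x i)))).
by rewrite ler_sqr ?nnegrE ?sqrtr_ge0 // (le_trans _ h) ?sqrtr_ge0.
Qed.

Lemma col_ge {k : nat} (V : 'I_k -> Y -> R) y :
  \sum_i V i y ^+ 2 <= col_norm V ^+ 2.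
Proof.
have h : Num.sqrt (\sum_i V i y ^+ 2) <= col_norm V
  by exact: (le_bigmax _ (fun y => Num.sqrt (\sum_i V i y ^+ 2)) y).
rewrite -(sqr_sqrtr (sumr_ge0 _ (fun i _ => sqr_ge0 (V i y)))).
by rewrite ler_sqr ?nnegrE ?sqrtr_ge0 // (le_trans _ h) ?sqrtr_ge0.
Qed.

Lemma row_ge0 (k : nat) (U : X -> 'I_k -> R) : 0 <= row_norm U.
Proof. exact: bigmax_ge_id. Qed.
Lemma col_ge0 (k : nat) (V : 'I_k -> Y -> R) : 0 <= col_norm V.
Proof. exact: bigmax_ge_id. Qed.

Lemma abs_le_rc (A : X -> Y -> R) k U V : @factorizes R X Y A k U V ->
  forall x y, `|A x y| <= row_norm U * col_norm V.
Proof.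
move=> hf x y; rewrite hf.
have h1 := @cs _ _ (fun i => U x i) (fun i => V i y).
have h2 := row_ge U x; have h3 := col_ge V y.
rewrite -ler_sqr ?nnegrE ?mulr_ge0 ?row_ge0 ?col_ge0 // real_normK ?num_real //.
apply: (le_trans h1); rewrite exprMn; apply: ler_pM => //.
  by apply: sumr_ge0 => i _; exact: sqr_ge0.
by apply: sumr_ge0 => i _; exact: sqr_ge0.
Qed.

Lemma side (A : X -> Y -> R) alpha d xl wl (s : seq bool) (c : bool) :
  shatters A alpha d xl wl -> (size s < d)%N ->
  exists y, if c then wl s + alpha / 2 <= A (xl s) y
            else A (xl s) y <= wl s - alpha / 2.
Proof.
move=> hs hsz.
set t := [tuple nth c s (val j) | j < d].
have [y hy] := hs t.
exists y; have := hy (Ordinal hsz).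
have et : take (size s) t = s.
  (apply: (@eq_from_nth _ false)).
  (by rewrite size_takel // size_tuple ltnW).
  move=> j; rewrite size_takel; last by rewrite size_tuple ltnW.
  move=> hj.
  (rewrite nth_take //).
  have := nth_mktuple (fun j0 : 'I_d => nth c s (val j0)) false (Ordinal (ltn_trans hj hsz)).
  (rewrite /t /= => ->).
  (exact: set_nth_default).
have ec : tnth t (Ordinal hsz) = c by rewrite /t tnth_mktuple nth_default.
rewrite ec; change (take (size s) t) with (take (Ordinal hsz) t); by rewrite et.
Qed.

End M.


Lemma key (R : realType) (X Y : finType) (A : X -> Y -> R) (alpha : R) (d : nat)
  xl wl (k : nat) (U : X -> 'I_k -> R) (V : 'I_k -> Y -> R) (M : R) :
  0 < alpha -> factorizes A U V -> shatters A alpha d xl wl ->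
  (forall x y, `|A x y| <= M) -> (0 < d)%N ->
  0 < row_norm U -> 0 < col_norm V ->
  d%:R * alpha ^+ 2 <= 4 * (row_norm U * col_norm V + M ^+ 2) * (row_norm U * col_norm V + 1).
Proof.
move=> ha hf hs hM hd hr hc.
set r := row_norm U in hr *; set c := col_norm V in hc *.
pose lam := c / r.
have hlam : 0 < lam by rewrite divr_gt0.
pose P := @pth R X k U xl wl lam.
pose B := lam * r ^+ 2 + M ^+ 2.
have hw : forall j, (j < d)%N -> wl (P j) ^+ 2 <= M ^+ 2.
  move=> j hj.
  have hsz : (size (P j) < d)%N by rewrite size_pth.
  have [y1 h1] := @side _ _ _ _ _ _ _ _ (P j) true hs hsz.
  have [y2 h2] := @side _ _ _ _ _ _ _ _ (P j) false hs hsz.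
  have := hM (xl (P j)) y1; have := hM (xl (P j)) y2.
  rewrite !ler_norml => /andP[h3 h4] /andP[h5 h6].
  move: h1 h2 h3 h4 h5 h6; set w := wl _; set a1 := A _ y1; set a2 := A _ y2.
  move=> *; nra.
pose Q := @Pn R X k U xl wl lam d.
pose q := @qn R X k U xl wl lam d.
have hpot' : lam * \sum_i Q i ^+ 2 + q ^+ 2 <= d%:R * B.
  apply: pot => j hj; rewrite /B; apply: lerD; last exact: hw.
  by apply: ler_wpM2l; [exact: ltW | exact: row_ge].
have hb : size (P d) == d by rewrite size_pth.
have [y hy] := hs (Tuple hb).
pose sgb j := sg R (@bitf R X k U xl wl lam j).
have hterm : forall i : 'I_d, alpha / 2 <= sgb i * (A (xl (P i)) y - wl (P i)).
  move=> i; have := hy i.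
  have et : take i (Tuple hb) = P i by rewrite /= take_pth // ltnW.
  have en : tnth (Tuple hb) i = @bitf R X k U xl wl lam i by rewrite (tnth_nth false) /= nth_pth.
  rewrite en et /sgb /sg; case: (bitf _ _ _ _ _ _ _ _) => h; lra.
have hlow : d%:R * (alpha / 2) <= \sum_(i < d) sgb i * (A (xl (P i)) y - wl (P i)).
  have : \sum_(i < d) (alpha / 2) <= \sum_(i < d) sgb i * (A (xl (P i)) y - wl (P i)).
    by apply: ler_sum => i _; exact: hterm.
  by move=> h; rewrite sumr_const card_ord in h; rewrite mulr_natl.
have e1 : \sum_i Q i * V i y = \sum_(j < d) sgb j * \sum_i U (xl (P j)) i * V i y.
  rewrite /Q; under eq_bigr => i _ do rewrite Pn_sum mulr_suml.
  rewrite exchange_big /=; apply: eq_bigr => j _; rewrite mulr_sumr.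
  by apply: eq_bigr => i _; rewrite mulrA.
have hid : \sum_(i < d) sgb i * (A (xl (P i)) y - wl (P i)) = \sum_i Q i * V i y + q.
  rewrite e1 /q qn_sum -sumrN -big_split /=.
  by apply: eq_bigr => j _; rewrite hf mulrBr.
rewrite hid in hlow.
set Z := \sum_i Q i * V i y in hlow.
set a := \sum_i Q i ^+ 2 in hpot'.
set Yv := \sum_i V i y ^+ 2.
have hcs : Z ^+ 2 <= a * Yv := @cs R k Q (fun i => V i y).
have hYv : Yv <= c ^+ 2 by apply: col_ge.
have ha0 : 0 <= a by apply: sumr_ge0 => i _; exact: sqr_ge0.
have hY0 : 0 <= Yv by apply: sumr_ge0 => i _; exact: sqr_ge0.
pose e := Yv / lam.
have he0 : 0 <= e by rewrite divr_ge0 // ltW.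
have hlame : lam * e = Yv by rewrite /e mulrC divfK // gt_eqF.
have he : e <= r * c.
  have -> : r * c = c ^+ 2 / lam by rewrite /lam; field; rewrite ?gt_eqF.
  by rewrite /e ler_wpM2r // invr_ge0 ltW.
have hB : B = r * c + M ^+ 2 by rewrite /B /lam; field; rewrite gt_eqF.
have hc2 : Z ^+ 2 <= (lam * a) * e by rewrite -mulrA (mulrC a) mulrA hlame mulrC.
have hcomb := @comb R (lam * a) e Z q (mulr_ge0 (ltW hlam) ha0) he0 hc2.
have h1 : (Z + q) ^+ 2 <= (lam * a + q ^+ 2) * (e + 1) by nra.
have hD : 0 < d%:R :> R by rewrite ltr0n.
have hx0 : 0 <= d%:R * (alpha / 2) by rewrite mulr_ge0 // ?ler0n // divr_ge0 // ltW.
have h2 : (d%:R * (alpha / 2)) ^+ 2 <= (Z + q) ^+ 2 by rewrite ler_sqr // nnegrE (le_trans hx0).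
have h3 : (lam * a + q ^+ 2) * (e + 1) <= (d%:R * B) * (r * c + 1).
  apply: ler_pM.
  - by rewrite addr_ge0 ?sqr_ge0 // mulr_ge0 // ltW.
  - by rewrite addr_ge0.
  - exact: hpot'.
  - by rewrite lerD2r.
have h4 := le_trans h2 (le_trans h1 h3).
rewrite -(ler_pM2l hD) -hB.
move: h4; set D := d%:R; set K := B * (r * c + 1).
have -> : (D * (alpha / 2)) ^+ 2 = D * (D * alpha ^+ 2) / 4 by field.
have -> : D * B * (r * c + 1) = D * K by rewrite /K mulrA.
move=> h4.
have -> : D * (4 * B * (r * c + 1)) = 4 * (D * K) by rewrite /K; ring.
lra.
Qed.


Theorem proposition3p2 (R : realType) (X Y : finType)
  (hX : (0 < #|X|)%N) (hY : (0 < #|Y|)%N)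
  (alpha : R) (halpha : 0 < alpha) (A : X -> Y -> R)
  (d : nat) (gamma M : R)
  (hd : Ldim_is A alpha d) (hg : gamma2 A = gamma) (hM : max_abs A = M) :
  alpha * Num.sqrt d%:R / (2 * (M + 1)) - 1 <= gamma /\
  d%:R <= 4 * (gamma + 1) ^+ 4 / alpha ^+ 2.
Proof.
have hAM : forall x y, `|A x y| <= M by move=> x y; rewrite -hM abs_le_max.
have hM0 : 0 <= M by rewrite -hM max_abs_ge0.
set L := alpha * Num.sqrt d%:R / (2 * (M + 1)) - 1.
pose E := [set r : R | exists k (U : X -> 'I_k -> R) (V : 'I_k -> Y -> R),
         factorizes A U V /\ r = row_norm U * col_norm V]%classic.
have hE : gamma = inf E by rewrite -hg.
have hne : (E !=set0)%classic.
  exists (row_norm (fun x (i : 'I_#|Y|) => A x (enum_val i)) *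
          col_norm (fun (i : 'I_#|Y|) y => (i == enum_rank y)%:R)).
  exists #|Y|, (fun x i => A x (enum_val i)), (fun i y => (i == enum_rank y)%:R).
  split => //.
  move=> x y; rewrite (bigD1 (enum_rank y)) //= eqxx mulr1 enum_rankK big1 ?addr0 //.
  by move=> i /negbTE ->; rewrite mulr0.
have hbnd : forall p, E p -> [/\ 0 <= p, M <= p & L <= p].
  move=> p [k [U [V [hf ->]]]].
  have hr0 := @row_ge0 R X k U; have hc0 := @col_ge0 R Y k V.
  have hp0 : 0 <= row_norm U * col_norm V by rewrite mulr_ge0.
  have hMp : M <= row_norm U * col_norm V.
    rewrite -hM; apply: bigmax_le => // x _; apply: bigmax_le => // y _.
    exact: abs_le_rc.
  split => //.
  set r := row_norm U in hr0 hp0 hMp *; set c := col_norm V in hc0 hp0 hMp *.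
  have hM1 : 0 < 2 * (M + 1) by lra.
  rewrite /L lerBlDr ler_pdivrMr //.
  case: (posnP d) => [->|hd0].
    by rewrite sqrtr0 mulr0 mulr_ge0 ?addr_ge0 // ltW.
  have [[xl [wl hs]] _] := hd.
  have hsz : (size ([::] : seq bool) < d)%N by [].
  have [y1 h1] := @side _ _ _ _ _ _ _ _ [::] true hs hsz.
  have [y2 h2] := @side _ _ _ _ _ _ _ _ [::] false hs hsz.
  have := hAM (xl [::]) y1; have := hAM (xl [::]) y2.
  rewrite !ler_norml => /andP[h3 h4] /andP[h5 h6].
  have hMpos : 0 < M by lra.
  have hr : 0 < r by rewrite lt_def; apply/andP; split => //; apply/eqP => e0; move: hMp; rewrite e0 mul0r; lra.
  have hc : 0 < c by rewrite lt_def; apply/andP; split => //; apply/eqP => e0; move: hMp; rewrite e0 mulr0; lra.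
  have hk := @key R X Y A alpha d xl wl k U V M halpha hf hs hAM hd0 hr hc.
  rewrite -/r -/c in hk.
  have hk2 : d%:R * alpha ^+ 2 <= (2 * (M + 1) * (r * c + 1)) ^+ 2 by nra.
  have hsq : (alpha * Num.sqrt d%:R) ^+ 2 = d%:R * alpha ^+ 2.
    by rewrite exprMn sqr_sqrtr ?ler0n // mulrC.
  rewrite -ler_sqr ?nnegrE.
  - by rewrite hsq [X in _ <= X ^+ 2]mulrC.
  - by rewrite mulr_ge0 // ?sqrtr_ge0 // ltW.
  - by rewrite mulr_ge0 ?addr_ge0 // ltW.
have hlb : forall z, (forall p, E p -> z <= p) -> z <= gamma.
  by move=> z hz; rewrite hE; apply: lb_le_inf.
have hL : L <= gamma by apply: hlb => p /hbnd [].
have hMg : M <= gamma by apply: hlb => p /hbnd [].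
have hg0 : 0 <= gamma by apply: hlb => p /hbnd [].
split => //.
have hM1 : 0 < 2 * (M + 1) by lra.
move: hL; rewrite /L lerBlDr ler_pdivrMr // => hL.
have h1 : alpha * Num.sqrt d%:R <= 2 * (gamma + 1) ^+ 2 by nra.
have hsq : (alpha * Num.sqrt d%:R) ^+ 2 = d%:R * alpha ^+ 2.
  by rewrite exprMn sqr_sqrtr ?ler0n // mulrC.
have h2 : d%:R * alpha ^+ 2 <= 4 * (gamma + 1) ^+ 4.
  rewrite -hsq (_ : 4 * (gamma + 1) ^+ 4 = (2 * (gamma + 1) ^+ 2) ^+ 2); last by ring.
  rewrite ler_sqr ?nnegrE //.
    by rewrite mulr_ge0 ?sqrtr_ge0 // ltW.
  by rewrite mulr_ge0 ?sqr_ge0.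
by rewrite ler_pdivlMr ?exprn_gt0.
Qed.
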